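(* Let $d \ge 1$ and equip $\mathbb{R}^d$ with the Euclidean norm $\|\cdot\|_2$. For a set $\mathcal{S}\subset\mathbb{R}^d$ write $\mathrm{dist}(x,\mathcal{S}) = \inf_{s\in\mathcal{S}}\|x-s\|_2$ and $\mathcal{B}(\mathcal{S},r) = \{x\in\mathbb{R}^d : \mathrm{dist}(x,\mathcal{S})\le r\}$. Let $\epsilon>0$ and $\delta > 2\epsilon$. Let $n$ and $B$ be two modalities, and for each class $c\in\{1,\ldots,K\}$ let $\mathcal{M}_c^{(n)},\mathcal{M}_c^{(B)}\subset\mathbb{R}^d$ be nonempty class structures such that, for each modality $m\in\{n,B\}$ and all $i\ne j$, $\inf_{u\in\mathcal{M}_i^{(m)},\,v\in\mathcal{M}_j^{(m)}}\|u-v\|_2 \ge \delta$. Let $y \ne k$ be two classes, and let $z^{(n)}\in\mathcal{B}(\mathcal{M}_y^{(n)},\epsilon)$ and $z^{(B)}\in\mathcal{B}(\mathcal{M}_k^{(B)},\epsilon)$. Let $\Phi_{n\to B}:\mathbb{R}^d\to\mathbb{R}^d$ be a map that is $\xi$-semantically consistent for some $0\le\xi\le\epsilon$, i.e. $\mathrm{dist}(\Phi_{n\to B}(u),\mathcal{M}_y^{(B)})\le\xi$ for every $u\in\mathcal{B}(\mathcal{M}_y^{(n)},\epsilon)$. Then $$\mathcal{E}_{\mathrm{inter}}^{(n\to B)} := \|\Phi_{n\to B}(z^{(n)}) - z^{(B)}\|_2^2 \ge (\delta-2\epsilon)^2.$$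
   Context: Setting: latent representations of each modality lie in $\mathbb{R}^d$. The paper assumes (latent space regularity) that representations of class $c$ from modality $m$ concentrate within distance $\epsilon$ of a class structure $\mathcal{M}_c^{(m)}$, and that distinct class structures within each modality are separated by margin $\delta>2\epsilon$. ''$z^{(n)}$ encodes class $y$'' means $z^{(n)}\in\mathcal{B}(\mathcal{M}_y^{(n)},\epsilon)$; ''$z^{(B)}$ encodes a conflicting class $k\neq y$'' means $z^{(B)}\in\mathcal{B}(\mathcal{M}_k^{(B)},\epsilon)$. In the paper the cross-modal map is the one-step map $\Phi_{n\to B}(z) = z + v_\Phi^{(n\to B)}(z,0)$ induced by a learned velocity field $v_\Phi^{(n\to B)}$, but the result only uses the stated consistency property. *)

(* Defs.v *)
From HB Require Import structures.
From mathcomp Require Import all_boot all_order all_algebra.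
From mathcomp Require Import all_classical reals.
Set Implicit Arguments. Unset Strict Implicit. Unset Printing Implicit Defensive.
Import Order.TTheory GRing.Theory Num.Theory.
Local Open Scope ring_scope.
Local Open Scope classical_set_scope.

Definition norm2 {R : realType} {d : nat} (x : 'rV[R]_d) : R :=
  Num.sqrt (\sum_(i < d) (x ord0 i) ^+ 2).

Definition dist {R : realType} {d : nat} (x : 'rV[R]_d) (S : set 'rV[R]_d) : R :=
  inf [set norm2 (x - s) | s in S].

Definition nbhdB {R : realType} {d : nat} (S : set 'rV[R]_d) (r : R) : set 'rV[R]_d :=
  [set x | dist x S <= r].

Definition set_sep {R : realType} {d : nat} (A B : set 'rV[R]_d) : R :=
  inf [set norm2 (u - v) | u in A & v in B].

(* Main.v *)
Require Import Defs.
From HB Require Import structures.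
From mathcomp Require Import all_boot all_order all_algebra.
From mathcomp Require Import all_classical reals.
From mathcomp Require Import ring lra.
Import Order.TTheory GRing.Theory Num.Theory.
Local Open Scope ring_scope.
Local Open Scope classical_set_scope.

Section Aux.
Variable R : realType.

Lemma cs_sum (d : nat) (f g : 'I_d -> R) :
  \sum_i f i * g i <= Num.sqrt (\sum_i f i ^+ 2) * Num.sqrt (\sum_i g i ^+ 2).
Proof.
set A := \sum_i f i ^+ 2; set B := \sum_i g i ^+ 2.
have A0 : 0 <= A by apply: sumr_ge0 => i _; exact: sqr_ge0.
have B0 : 0 <= B by apply: sumr_ge0 => i _; exact: sqr_ge0.
set a := Num.sqrt A; set b := Num.sqrt B.
have a0 : 0 <= a by exact: sqrtr_ge0.
have b0 : 0 <= b by exact: sqrtr_ge0.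
have [ae|an0] := eqVneq a 0.
  have H : A = 0.
    by apply/eqP; rewrite eq_le A0 andbT -sqrtr_eq0; apply/eqP.
  rewrite ae mul0r big1 // => i _.
  have : f i ^+ 2 = 0 by apply: (psumr_eq0P _ H) => // i0 _; exact: sqr_ge0.
  by move/eqP; rewrite sqrf_eq0 => /eqP ->; rewrite mul0r.
have [be|bn0] := eqVneq b 0.
  have H : B = 0.
    by apply/eqP; rewrite eq_le B0 andbT -sqrtr_eq0; apply/eqP.
  rewrite be mulr0 big1 // => i _.
  have : g i ^+ 2 = 0 by apply: (psumr_eq0P _ H) => // i0 _; exact: sqr_ge0.
  by move/eqP; rewrite sqrf_eq0 => /eqP ->; rewrite mulr0.
have ap : 0 < a by rewrite lt_def an0.
have bp : 0 < b by rewrite lt_def bn0.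
have key : 2 * (a * b) * (\sum_i f i * g i) <= 2 * (a * b) * (a * b).
  have -> : 2 * (a * b) * (a * b) = b ^+ 2 * A + a ^+ 2 * B.
    have sA : A = a ^+ 2 by rewrite sqr_sqrtr.
    have sB : B = b ^+ 2 by rewrite sqr_sqrtr.
    by rewrite sA sB; ring.
  rewrite mulr_sumr !mulr_sumr -big_split /=.
  apply: ler_sum => i _.
  have := sqr_ge0 (b * f i - a * g i); nra.
rewrite -subr_ge0 -(pmulr_rge0 _ (_ : 0 < 2 * (a * b))); last by rewrite mulr_gt0 // mulr_gt0.
by rewrite mulrBr subr_ge0.
Qed.

Lemma norm2_ge0 (d : nat) (x : 'rV[R]_d) : 0 <= norm2 x.
Proof. exact: sqrtr_ge0. Qed.

Lemma norm2N (d : nat) (x : 'rV[R]_d) : norm2 (- x) = norm2 x.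
Proof. by rewrite /norm2; congr Num.sqrt; apply: eq_bigr => i _; rewrite mxE sqrrN. Qed.

Lemma norm2D (d : nat) (x y : 'rV[R]_d) : norm2 (x + y) <= norm2 x + norm2 y.
Proof.
rewrite /norm2.
set a := Num.sqrt (\sum_i x ord0 i ^+ 2); set b := Num.sqrt (\sum_i y ord0 i ^+ 2).
have a0 : 0 <= a by exact: sqrtr_ge0.
have b0 : 0 <= b by exact: sqrtr_ge0.
rewrite -(ger0_norm (addr_ge0 a0 b0)) -sqrtr_sqr ler_wsqrtr //.
have -> : \sum_(i < d) (x + y) ord0 i ^+ 2 =
   \sum_i x ord0 i ^+ 2 + 2 * \sum_i x ord0 i * y ord0 i + \sum_i y ord0 i ^+ 2.
  rewrite mulr_sumr -!big_split /=; apply: eq_bigr => i _; rewrite mxE; ring.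
have := @cs_sum d (fun i => x ord0 i) (fun i => y ord0 i).
rewrite -/a -/b.
have sa : a ^+ 2 = \sum_i x ord0 i ^+ 2 by rewrite sqr_sqrtr // sumr_ge0 // => i _; exact: sqr_ge0.
have sb : b ^+ 2 = \sum_i y ord0 i ^+ 2 by rewrite sqr_sqrtr // sumr_ge0 // => i _; exact: sqr_ge0.
rewrite -sa -sb; nra.
Qed.

End Aux.

Arguments cs_sum {R d}.
Arguments norm2_ge0 {R d}.
Arguments norm2N {R d}.
Arguments norm2D {R d}.

Lemma dist_lt {R : realType} {d : nat} {x : 'rV[R]_d} {S : set 'rV[R]_d} {e : R} :
  S !=set0 -> dist x S < e -> exists2 s, S s & norm2 (x - s) < e.
Proof.
move=> [s0 Ss0] /inf_lt [].
  by exists (norm2 (x - s0)), s0.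
by move=> _ [s Ss <-] H; exists s.
Qed.

Lemma sep_le {R : realType} {d : nat} {A B : set 'rV[R]_d} {u v} :
  A u -> B v -> set_sep A B <= norm2 (u - v).
Proof.
move=> Au Bv; rewrite /set_sep.
apply: ge_inf.
  by exists 0 => _ [p _ [q _ <-]]; exact: norm2_ge0.
by exists u => //; exists v.
Qed.

Theorem theorem4p4 (R : realType) (d K : nat) (hd : (0 < d)%N)
  (eps delta xi : R) (heps : 0 < eps) (hdelta : 2 * eps < delta)
  (Mn MB : 'I_K -> set 'rV[R]_d)
  (hMn0 : forall c, Mn c !=set0) (hMB0 : forall c, MB c !=set0)
  (hsepn : forall i j, i != j -> delta <= set_sep (Mn i) (Mn j))
  (hsepB : forall i j, i != j -> delta <= set_sep (MB i) (MB j))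
  (y k : 'I_K) (hyk : y != k)
  (zn zB : 'rV[R]_d) (hzn : nbhdB (Mn y) eps zn) (hzB : nbhdB (MB k) eps zB)
  (Phi : 'rV[R]_d -> 'rV[R]_d) (hxi0 : 0 <= xi) (hxi : xi <= eps)
  (hcons : forall u, nbhdB (Mn y) eps u -> dist (Phi u) (MB y) <= xi) :
  (delta - 2 * eps) ^+ 2 <= (norm2 (Phi zn - zB)) ^+ 2.
Proof.
set a := Phi zn.
have ha : dist a (MB y) <= eps := le_trans (hcons zn hzn) hxi.
have hb : dist zB (MB k) <= eps := hzB.
set N := norm2 (a - zB).
have N0 : 0 <= N := norm2_ge0 _.
suff HN : delta - 2 * eps <= N by nra.
rewrite leNgt; apply/negP => HN.
set eta := (delta - 2 * eps - N) / 4.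
have etap : 0 < eta by rewrite /eta divr_gt0 // subr_gt0.
have h1 : dist a (MB y) < eps + eta by apply: (le_lt_trans ha); rewrite ltrDl.
have h2 : dist zB (MB k) < eps + eta by apply: (le_lt_trans hb); rewrite ltrDl.
have [u Mu Hu] := dist_lt (hMB0 y) h1.
have [v Mv Hv] := dist_lt (hMB0 k) h2.
have Huv := sep_le Mu Mv.
have Hs := hsepB y k hyk.
have Htri : norm2 (u - v) <= norm2 (a - u) + N + norm2 (zB - v).
  have -> : u - v = (- (a - u)) + ((a - zB) + (zB - v)) by rewrite opprB !addrA !subrK.
  apply: (le_trans (norm2D _ _)); rewrite norm2N -[norm2 (a - u) + N + _]addrA lerD2l.
  exact: norm2D.
have : 4 * eta = delta - 2 * eps - N by rewrite /eta; field.
lra.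
Qed.
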